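(* Let $\mathcal{K}=(\mathcal{R},\mathcal{T})$ be an ME-consistent $\mathcal{ALCP}$ knowledge base, $C,D$ concepts, $\kappa\in\mathcal{L}$, and $p_1<p_2$. Suppose $\mathcal{P}_1,\mathcal{P}_2$ are ME-$\mathcal{ALCP}$-models of $\mathcal{K}$ with $\Pr_{\mathcal{P}_1}(C\sqsubseteq D\mid\kappa)=p_1$ and $\Pr_{\mathcal{P}_2}(C\sqsubseteq D\mid\kappa)=p_2$. Then for every $p$ between $p_1$ and $p_2$ there exists an ME-$\mathcal{ALCP}$-model $\mathcal{P}$ of $\mathcal{K}$ with $\Pr_{\mathcal{P}}(C\sqsubseteq D\mid\kappa)=p$.
   Context: $\mathcal{L}$ is a propositional language over a finite set of variables; $\mathrm{Int}(\mathcal{L})$ is the set of truth assignments. A probability distribution over $\mathcal{L}$ is $P:\mathrm{Int}(\mathcal{L})\to[0,1]$ summing to $1$, with $P(\phi)=\sum_{v\models\phi}P(v)$. A probabilistic constraint is $c_0+\sum_{i=1}^k c_i\,\mathsf{p}(\phi_i)\ge 0$ ($c_i\in\mathbb{R}$, $\phi_i\in\mathcal{L}$), satisfied by $P$ iff $c_0+\sum_ic_iP(\phi_i)\ge0$; $\mathrm{Mod}(\mathcal{R})$ is the set of distributions satisfying all constraints in $\mathcal{R}$; for consistent $\mathcal{R}$ (i.e. $\mathrm{Mod}(\mathcal{R})\ne\emptyset$), $P^{ME}_{\mathcal{R}}$ is the unique maximizer in $\mathrm{Mod}(\mathcal{R})$ of $H(P)=-\sum_vP(v)\log P(v)$. Concepts: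 $C::=A\mid\neg C\mid C\sqcap C\mid\exists r.C$ with concept names $A$ and role names $r$. An $\mathcal{L}$-GCI is $\langle C\sqsubseteq D:\kappa\rangle$, $\kappa\in\mathcal{L}$; an $\mathcal{L}$-TBox is a finite set of them; a KB is $\mathcal{K}=(\mathcal{R},\mathcal{T})$ with $\mathcal{R}$ a set of probabilistic constraints and $\mathcal{T}$ an $\mathcal{L}$-TBox. A possible world $\mathcal{I}=(\Delta^{\mathcal{I}},\cdot^{\mathcal{I}},v^{\mathcal{I}})$ consists of a classical $\mathcal{ALC}$ interpretation (nonempty domain, concept names to subsets, role names to binary relations, extended as usual to complex concepts) and $v^{\mathcal{I}}\in\mathrm{Int}(\mathcal{L})$; it models $\langle C\sqsubseteq D:\kappa\rangle$ iff $v^{\mathcal{I}}\not\models\kappa$ or $C^{\mathcal{I}}\subseteq D^{\mathcal{I}}$. We write $\mathcal{I}\models\kappa$ for $v^{\mathcal{I}}\models\kappa$ and $\mathcal{I}\models C\sqsubseteq D$ for $C^{\mathcal{I}}\subseteq D^{\mathcal{I}}$. An $\mathcal{ALCP}$-interpretation $\mathcal{P}=(\mathfrak{I},P_{\mathfrak{I}})$ is a nonempty finite set of possible worlds with a probability distribution on it; $P^{\mathcal{P}}(v)=\sum_{\mathcal{I}\in\mathfrak{I},v^{\mathcal{I}}=v}P_{\mathfrak{I}}(\mathcal{I})$. $\mathcal{P}$ is an ME-$\mathcal{ALCP}$-model of $\mathcal{K}$ iff all worlds in $\mathfrak{I}$ model every GCI of $\mathcal{T}$ and $P^{\mathcal{P}}=P^{ME}_{\mathcal{R}}$;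 $\mathcal{K}$ is ME-consistent iff such a model exists. $\Pr_{\mathcal{P}}(C\sqsubseteq D\mid\kappa)=\big(\sum_{\mathcal{I}\in\mathfrak{I},\mathcal{I}\models\kappa,\mathcal{I}\models C\sqsubseteq D}P_{\mathfrak{I}}(\mathcal{I})\big)/\big(\sum_{\mathcal{I}\in\mathfrak{I},\mathcal{I}\models\kappa}P_{\mathfrak{I}}(\mathcal{I})\big)$, defined when the denominator (which equals $P^{\mathcal{P}}(\kappa)$) is positive. *)

(* Defs.v *)
From HB Require Import structures.
From mathcomp Require Import all_boot all_order all_algebra.
From mathcomp Require Import boolp reals exp.
From Stdlib Require List.
Set Implicit Arguments. Unset Strict Implicit. Unset Printing Implicit Defensive.
Import Order.TTheory GRing.Theory Num.Theory.
Local Open Scope ring_scope.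

Inductive formula (V : Type) : Type :=
  | FVar of V
  | FNot of formula V
  | FAnd of formula V & formula V
  | FOr of formula V & formula V.

Definition assignment (V : finType) := {ffun V -> bool}.

Fixpoint holds (V : finType) (v : assignment V) (f : formula V) : bool :=
  match f with
  | FVar x => v x
  | FNot g => ~~ holds v g
  | FAnd g h => holds v g && holds v h
  | FOr g h => holds v g || holds v h
  end.

Definition is_distr (V : finType) (R : realType) (P : assignment V -> R) : Prop :=
  (forall v, 0 <= P v) /\ \sum_(v : assignment V) P v = 1.

Definition prob (V : finType) (R : realType) (P : assignment V -> R) (f : formula V) : R :=
  \sum_(v : assignment V | holds v f) P v.

Record constraint (V : finType) (R : realType) := Constraint {
  c0 : R;
  cterms : seq (R * formula V) }.

Definition sat_constraint (V : finType) (R : realType) (P : assignment V -> R)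
  (c : constraint V R) : Prop :=
  0 <= c0 c + \sum_(t <- cterms c) t.1 * prob P t.2.

Definition Mod (V : finType) (R : realType) (Rc : constraint V R -> Prop)
  (P : assignment V -> R) : Prop :=
  is_distr P /\ forall c, Rc c -> sat_constraint P c.

(* entropy, with the convention 0 log 0 = 0 *)
Definition xlnx (R : realType) (x : R) : R := if x == 0 then 0 else x * ln x.
Definition entropy (V : finType) (R : realType) (P : assignment V -> R) : R :=
  - \sum_(v : assignment V) xlnx (P v).

Definition is_ME_distr (V : finType) (R : realType) (Rc : constraint V R -> Prop)
  (P : assignment V -> R) : Prop :=
  Mod Rc P /\ forall Q, Mod Rc Q -> entropy Q <= entropy P.

Inductive concept (CN RN : Type) : Type :=
  | CAtom of CN
  | CNeg of concept CN RN
  | CAnd of concept CN RN & concept CN RN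
  | CEx of RN & concept CN RN.

Record world (V : finType) (CN RN : Type) := World {
  dom : Type;
  dom_inh : dom;
  cint : CN -> dom -> Prop;
  rint : RN -> dom -> dom -> Prop;
  wval : assignment V }.

Fixpoint cext (V : finType) (CN RN : Type) (I : world V CN RN)
  (C : concept CN RN) : dom I -> Prop :=
  match C with
  | CAtom a => @cint V CN RN I a
  | CNeg C' => fun x => ~ @cext V CN RN I C' x
  | CAnd C1 C2 => fun x => @cext V CN RN I C1 x /\ @cext V CN RN I C2 x
  | CEx r C' => fun x => exists y, @rint V CN RN I r x y /\ @cext V CN RN I C' y
  end.
Arguments cext {V CN RN} I C _.

Definition w_subsumes (V : finType) (CN RN : Type) (I : world V CN RN)
  (C D : concept CN RN) : Prop :=
  forall x, cext I C x -> cext I D x.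

Record gci (V : finType) (CN RN : Type) := GCI {
  glhs : concept CN RN;
  grhs : concept CN RN;
  gctx : formula V }.

Definition models_gci (V : finType) (CN RN : Type) (I : world V CN RN)
  (g : gci V CN RN) : Prop :=
  ~~ holds (wval I) (gctx g) \/ w_subsumes I (glhs g) (grhs g).

Record kb (V : finType) (CN RN : Type) (R : realType) := KB {
  kbR : constraint V R -> Prop;
  kbT : seq (gci V CN RN) }.

Record alcp_interp (V : finType) (CN RN : Type) (R : realType) := ALCPInterp {
  widx : finType;
  wrld : widx -> world V CN RN;
  wpr : widx -> R;
  wpr_ge0 : forall i, 0 <= wpr i;
  wpr_sum1 : \sum_(i : widx) wpr i = 1 }.
Arguments wrld {V CN RN R} a _.
Arguments wpr {V CN RN R} a _.

Definition induced_distr (V : finType) (CN RN : Type) (R : realType)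
  (P : alcp_interp V CN RN R) : assignment V -> R :=
  fun v => \sum_(i : widx P | wval (wrld P i) == v) wpr P i.

Definition ME_model (V : finType) (CN RN : Type) (R : realType)
  (K : kb V CN RN R) (P : alcp_interp V CN RN R) : Prop :=
  (forall i g, Stdlib.Lists.List.In g (kbT K) -> models_gci (wrld P i) g) /\
  is_ME_distr (kbR K) (induced_distr P).

Definition ME_consistent (V : finType) (CN RN : Type) (R : realType)
  (K : kb V CN RN R) : Prop :=
  exists P : alcp_interp V CN RN R, ME_model K P.

(* Pr_P(C ⊑ D | kappa) = p  (including that it is defined) *)
Definition cond_num (V : finType) (CN RN : Type) (R : realType)
  (P : alcp_interp V CN RN R) (C D : concept CN RN) (kappa : formula V) : R :=
  \sum_(i : widx P | holds (wval (wrld P i)) kappa && `[< w_subsumes (wrld P i) C D >])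
    wpr P i.

Definition cond_den (V : finType) (CN RN : Type) (R : realType)
  (P : alcp_interp V CN RN R) (kappa : formula V) : R :=
  \sum_(i : widx P | holds (wval (wrld P i)) kappa) wpr P i.

Definition cond_pr_is (V : finType) (CN RN : Type) (R : realType)
  (P : alcp_interp V CN RN R) (C D : concept CN RN) (kappa : formula V) (p : R) : Prop :=
  0 < cond_den P kappa /\ cond_num P C D kappa / cond_den P kappa = p.

(* Main.v *)
Require Import Defs.
From HB Require Import structures.
From mathcomp Require Import all_boot all_order all_algebra.
From mathcomp Require Import boolp reals exp.
From mathcomp Require Import ring lra.
Import Order.TTheory GRing.Theory Num.Theory.
Set Implicit Arguments. Unset Strict Implicit.
Local Open Scope ring_scope.

Lemma ln_le_sub1 {R : realType} {y : R} : 0 < y -> ln y <= y - 1.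
Proof.
move=> y0; have := @le_ln1Dx R (y - 1).
rewrite addrCA subrr addr0; apply; lra.
Qed.

Lemma xlnx_lb (R : realType) (a c : R) : 0 <= a -> 0 < c ->
  a * ln c + a - c <= xlnx a.
Proof.
move=> a0 c0; rewrite /xlnx; have [->|an0] := eqVneq a 0.
  by rewrite mul0r add0r sub0r oppr_le0 ltW.
have ap : 0 < a by rewrite lt_neqAle eq_sym an0 a0.
have h := ln_le_sub1 (divr_gt0 c0 ap).
rewrite ln_div ?posrE // in h.
have : a * (ln c - ln a) <= a * (c / a - 1) by rewrite ler_pM2l.
rewrite mulrBr mulrBr mulrCA divff ?mulr1 //; lra.
Qed.

Lemma xlnx_convex (R : realType) (l a b : R) : 0 <= l <= 1 -> 0 <= a -> 0 <= b ->
  xlnx (l * a + (1 - l) * b) <= l * xlnx a + (1 - l) * xlnx b.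
Proof.
move=> /andP[l0 l1] a0 b0.
have la0 : 0 <= l * a by apply: mulr_ge0.
have lb0 : 0 <= (1 - l) * b by apply: mulr_ge0; lra.
have z0 : forall m x : R, 0 <= m -> 0 <= x -> m * x = 0 -> m * xlnx x = 0.
  move=> m x _ _ /eqP; rewrite mulf_eq0 => /orP[/eqP->|/eqP->]; first by rewrite mul0r.
  by rewrite /xlnx eqxx mulr0.
set c := l * a + (1 - l) * b.
have [c0|cn0] := eqVneq c 0.
  have h1 : l * a = 0 by move: c0; rewrite /c; lra.
  have h2 : (1 - l) * b = 0 by move: c0; rewrite /c; lra.
  rewrite c0 /xlnx eqxx -/(xlnx a) -/(xlnx b) (z0 _ _ l0 a0 h1).
  by rewrite (z0 _ _ _ b0 h2) ?addr0 //; lra.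
have cp : 0 < c by rewrite lt_neqAle eq_sym cn0 addr_ge0.
have ha : l * (a * ln c + a - c) <= l * xlnx a by rewrite ler_wpM2l // xlnx_lb.
have hb : (1 - l) * (b * ln c + b - c) <= (1 - l) * xlnx b.
  by rewrite ler_wpM2l ?xlnx_lb //; lra.
have -> : xlnx c = c * ln c by rewrite /xlnx (negbTE cn0).
have e : l * (a * ln c + a - c) + (1 - l) * (b * ln c + b - c) = c * ln c.
  by rewrite /c; ring.
by rewrite -e lerD.
Qed.

Section Mix.
Variables (V : finType) (R : realType) (Rc : constraint V R -> Prop).

Definition mixf (l : R) (Q1 Q2 : assignment V -> R) : assignment V -> R :=
  fun v => l * Q1 v + (1 - l) * Q2 v.

Lemma prob_mix l Q1 Q2 f : prob (mixf l Q1 Q2) f = l * prob Q1 f + (1 - l) * prob Q2 f.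
Proof. by rewrite /prob /mixf big_split /= -!mulr_sumr. Qed.

Lemma mix_ME l Q1 Q2 : 0 <= l <= 1 -> is_ME_distr Rc Q1 -> is_ME_distr Rc Q2 ->
  is_ME_distr Rc (mixf l Q1 Q2).
Proof.
move=> /andP[l0 l1] [[[Q1p Q1s] Q1c] Q1m] [[[Q2p Q2s] Q2c] Q2m].
have hM : Mod Rc (mixf l Q1 Q2).
  split; first split.
  - move=> v; rewrite /mixf addr_ge0 // mulr_ge0 //; lra.
  - by rewrite /mixf big_split /= -!mulr_sumr Q1s Q2s; ring.
  move=> c hc; rewrite /sat_constraint.
  have e : c0 c + \sum_(t <- cterms c) t.1 * prob (mixf l Q1 Q2) t.2 =
    l * (c0 c + \sum_(t <- cterms c) t.1 * prob Q1 t.2) +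
    (1 - l) * (c0 c + \sum_(t <- cterms c) t.1 * prob Q2 t.2).
    rewrite !mulrDr !mulr_sumr addrACA -big_split /=.
    have -> : l * c0 c + (1 - l) * c0 c = c0 c by ring.
    congr (_ + _); apply: eq_bigr => t _; rewrite prob_mix; ring.
  rewrite e addr_ge0 // mulr_ge0 //; [exact: Q1c | lra | exact: Q2c].
split => // Q hQ.
have h1 := Q1m Q hQ; have h2 := Q2m Q hQ.
have hc : l * entropy Q1 + (1 - l) * entropy Q2 <= entropy (mixf l Q1 Q2).
  rewrite /entropy !mulrN -opprD lerN2 !mulr_sumr -big_split /=.
  apply: ler_sum => v _; apply: xlnx_convex; rewrite ?l0 ?l1 //.
apply: le_trans hc.
have -> : entropy Q = l * entropy Q + (1 - l) * entropy Q by ring.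
rewrite lerD // ler_wpM2l //; lra.
Qed.
End Mix.

Section MixI.
Variables (V : finType) (CN RN : Type) (R : realType).
Variables (P1 P2 : alcp_interp V CN RN R) (l : R).
Hypothesis hl : 0 <= l <= 1.

Definition mw (s : (widx P1 + widx P2)%type) : world V CN RN :=
  match s with inl i => wrld P1 i | inr j => wrld P2 j end.
Definition mp (s : (widx P1 + widx P2)%type) : R :=
  match s with inl i => l * wpr P1 i | inr j => (1 - l) * wpr P2 j end.

Lemma mp_ge0 s : 0 <= mp s.
Proof.
case/andP: hl => l0 l1.
case: s => i /=; apply: mulr_ge0; rewrite ?wpr_ge0 //; lra.
Qed.

Lemma mp_sum1 : \sum_(s : (widx P1 + widx P2)%type) mp s = 1.
Proof.
rewrite big_sumType /= -!mulr_sumr !wpr_sum1; ring.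
Qed.

Definition mixI : alcp_interp V CN RN R := ALCPInterp mw mp_ge0 mp_sum1.

Lemma induced_mix : induced_distr mixI = mixf l (induced_distr P1) (induced_distr P2).
Proof.
apply: funext => v; rewrite /induced_distr /mixf /= big_sumType /= -!mulr_sumr //.
Qed.

Lemma num_mix C D k : cond_num mixI C D k = l * cond_num P1 C D k + (1 - l) * cond_num P2 C D k.
Proof. by rewrite /cond_num /= big_sumType /= -!mulr_sumr. Qed.

Lemma den_mix k : cond_den mixI k = l * cond_den P1 k + (1 - l) * cond_den P2 k.
Proof. by rewrite /cond_den /= big_sumType /= -!mulr_sumr. Qed.
End MixI.

Theorem theorem2 (V : finType) (CN RN : Type) (R : realType)
  (K : kb V CN RN R) (C D : concept CN RN) (kappa : formula V) (p1 p2 : R)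
  (P1 P2 : alcp_interp V CN RN R) :
  ME_consistent K -> p1 < p2 ->
  ME_model K P1 -> ME_model K P2 ->
  cond_pr_is P1 C D kappa p1 -> cond_pr_is P2 C D kappa p2 ->
  forall p : R, p1 <= p <= p2 ->
  exists P : alcp_interp V CN RN R, ME_model K P /\ cond_pr_is P C D kappa p.
Proof.
move=> _ p12 [T1 M1] [T2 M2] [d1p e1] [d2p e2] p /andP[pp1 pp2].
set d1 := cond_den P1 kappa in d1p e1; set d2 := cond_den P2 kappa in d2p e2.
set n1 := cond_num P1 C D kappa in e1; set n2 := cond_num P2 C D kappa in e2.
have en1 : n1 = p1 * d1 by rewrite -e1 divfK // gt_eqF.
have en2 : n2 = p2 * d2 by rewrite -e2 divfK // gt_eqF.
set a := d2 * (p2 - p); set b := d1 * (p - p1).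
have a0 : 0 <= a by apply: mulr_ge0; [exact: ltW | lra].
have b0 : 0 <= b by apply: mulr_ge0; [exact: ltW | lra].
have ab : 0 < a + b.
  have [pe|pn] := eqVneq p p1.
    by rewrite /a pe ltr_wpDr // mulr_gt0 //; lra.
  have hp : p1 < p by rewrite lt_neqAle eq_sym pn pp1.
  by rewrite ltr_wpDl // /b mulr_gt0 //; lra.
set l := a / (a + b).
have hl : 0 <= l <= 1.
  apply/andP; split; first by rewrite /l divr_ge0 // ltW.
  by rewrite /l ler_pdivrMr // mul1r; lra.
exists (mixI P1 P2 hl); split.
  split.
    by move=> [i|j] g hg /=; [apply: T1 | apply: T2].
  by rewrite induced_mix; apply: mix_ME.
rewrite /cond_pr_is num_mix den_mix -/n1 -/n2 -/d1 -/d2.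
have dp : 0 < l * d1 + (1 - l) * d2.
  case/andP: hl => l0 l1.
  have [->|ln0] := eqVneq l 0; first by rewrite mul0r add0r subr0 mul1r.
  have lp : 0 < l by rewrite lt_neqAle eq_sym ln0 l0.
  apply: ltr_pwDl; first exact: mulr_gt0.
  apply: mulr_ge0; [lra | exact: ltW].
split => //.
rewrite -[p](mulfK (lt0r_neq0 dp)); congr (_ / _).
rewrite en1 en2 /l.
have abn : a + b != 0 by rewrite lt0r_neq0.
move: abn; rewrite /a /b => abn.
by field.
Qed.
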